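(* For a quantum sequence ensemble $\mathcal{E}=\bigotimes_{l=1}^{L}\mathcal{E}^{l}$ and $\vec{x}=(x_{1},\ldots,x_{L})$ with $x_l\in\{1,\ldots,n_l\}$, we have \[ \mathcal{C}_{\vec{x}}(\mathcal{E})=\prod_{l=1}^{L}\mathcal{C}_{x_{l}}(\mathcal{E}^{l}). \]
   Context: Let $\mathcal{E}^{l}=\{\eta_{i}^{l},\rho_{i}^{l}\}_{i\in\{1,\ldots,n_{l}\}}$, $l=1,\ldots,L$, be quantum state ensembles (density operators $\rho_i^l$ on finite-dimensional Hilbert spaces, prepared with nonzero probabilities $\eta_i^l$), with average states $\rho_0^l=\sum_i\eta_i^l\rho_i^l$. The quantum sequence ensemble is $\mathcal{E}=\bigotimes_{l=1}^{L}\mathcal{E}^{l}=\{\eta_{\vec{c}},\rho_{\vec{c}}\}_{\vec{c}}$ with $\eta_{\vec{c}}=\prod_l\eta_{c_l}^l$, $\rho_{\vec{c}}=\bigotimes_l\rho_{c_l}^l$, and average state $\rho_0=\bigotimes_l\rho_0^l$. For any ensemble $\{\eta_i,\rho_i\}_i$ with average state $\rho_0$, and measurements (POVMs) $\{M_?\}\cup\{M_i\}_i$ where outcome $M_i$ means guessing $\rho_i$ and $M_?$ is inconclusive, the maximum confidence to identify $\rho_x$ is $\mathcal{C}_x=\max \eta_x\mathrm{Tr}(\rho_xM_x)/\mathrm{Tr}(\rho_0M_x)$ over all measurements with $\mathrm{Tr}(\rho_0M_x)>0$, i.e. the maximal conditional probability that $\rho_x$ was prepared given outcome $M_x$. $\mathcal{C}_{x_l}(\mathcal{E}^l)$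 is this quantity for ensemble $\mathcal{E}^l$, and $\mathcal{C}_{\vec{x}}(\mathcal{E})$ for the sequence ensemble. *)

(* Defs.v *)
From HB Require Import structures.
From mathcomp Require Import all_boot all_order all_algebra.
From mathcomp Require Import complex.
From mathcomp Require Import classical_sets reals.

Set Implicit Arguments.
Unset Strict Implicit.
Unset Printing Implicit Defensive.

Import Order.TTheory GRing.Theory Num.Theory.
Local Open Scope ring_scope.
Local Open Scope classical_set_scope.

Section Quantum.
Variable R : realType.
Local Notation C := R[i].

Definition adjmx m n (A : 'M[C]_(m, n)) : 'M[C]_(n, m) := (map_mx (@Num.conj _) A)^T.

(* positive semidefinite operator on C^d: Hermitian with nonnegative
   quadratic form (the order on C = R[i] is the numClosedField order,
   so 0 <= z means z is real and nonnegative). *)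
Definition psdmx d (A : 'M[C]_d) : Prop :=
  A = adjmx A /\ forall v : 'cV[C]_d, 0 <= (adjmx v *m A *m v) 0 0.

Definition density d (rho : 'M[C]_d) : Prop := psdmx rho /\ \tr rho = 1.

Definition ensemble d (K : finType) (eta : K -> R) (rho : K -> 'M[C]_d) : Prop :=
  (forall i, 0 < eta i) /\ \sum_i eta i = 1 /\ (forall i, density (rho i)).

Definition avg_state d (K : finType) (eta : K -> R) (rho : K -> 'M[C]_d)
  : 'M[C]_d := \sum_i ((eta i)%:C)%C *: rho i.

(* A measurement (POVM) {M_?} u {M_i}_i : outcome None is the inconclusive
   outcome M_?, outcome Some i means guessing rho_i. *)
Definition povm d (K : finType) (M : option K -> 'M[C]_d) : Prop :=
  (forall o, psdmx (M o)) /\ \sum_o M o = 1%:M.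

(* Tr(A B) as a real number (it is real for A, B positive semidefinite) *)
Definition trR d (A B : 'M[C]_d) : R := complex.Re (\tr (A *m B)).

Definition confidences d (K : finType) (eta : K -> R) (rho : K -> 'M[C]_d)
    (x : K) : set R :=
  [set r | exists M : option K -> 'M[C]_d,
     povm M /\ 0 < trR (avg_state eta rho) (M (Some x)) /\
     r = eta x * trR (rho x) (M (Some x)) / trR (avg_state eta rho) (M (Some x))].

(* maximum confidence C_x (defined as the supremum; it is attained) *)
Definition max_conf d (K : finType) (eta : K -> R) (rho : K -> 'M[C]_d)
    (x : K) : R := sup (confidences eta rho x).

Definition tidx (L : nat) (d : 'I_L -> nat) : finType :=
  {dffun forall l : 'I_L, 'I_(d l)}.

(* tensor product of L operators, acting on C^(#|tidx d|) whose basis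
   vectors are enumerated by enum_val (product basis) *)
Definition tensmxL (L : nat) (d : 'I_L -> nat) (A : forall l, 'M[C]_(d l))
  : 'M[C]_#|tidx d| :=
  \matrix_(i, j) \prod_(l < L) A l ((enum_val i : tidx d) l) ((enum_val j : tidx d) l).

Definition seq_index (L : nat) (n : 'I_L -> nat) : finType :=
  {dffun forall l : 'I_L, 'I_(n l)}.

Definition seq_eta (L : nat) (n : 'I_L -> nat) (eta : forall l, 'I_(n l) -> R)
  (c : seq_index n) : R := \prod_(l < L) eta l (c l).

Definition seq_rho (L : nat) (n d : 'I_L -> nat)
  (rho : forall l, 'I_(n l) -> 'M[C]_(d l)) (c : seq_index n)
  : 'M[C]_#|tidx d| := tensmxL (fun l => rho l (c l)).

End Quantum.

(* Main.v *)
Require Import Defs.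
From HB Require Import structures.
From mathcomp Require Import all_boot all_order all_algebra.
From mathcomp Require Import complex.
From mathcomp Require Import classical_sets reals.
From mathcomp Require Import spectral boolp lra.

Import Order.TTheory GRing.Theory Num.Theory.
Set Implicit Arguments.
Unset Strict Implicit.
Local Open Scope ring_scope.
Local Open Scope sesquilinear_scope.

Section Mx.
Variable R : realType.
Local Notation C := R[i].

Lemma adjmxE m n (A : 'M[C]_(m, n)) i j : adjmx A i j = (A j i)^*.
Proof. by rewrite /adjmx !mxE. Qed.

Lemma adjmxK m n (A : 'M[C]_(m, n)) : adjmx (adjmx A) = A.
Proof. by apply/matrixP => i j; rewrite !adjmxE conjCK. Qed.

Lemma adjmxM m n p (A : 'M[C]_(m, n)) (B : 'M[C]_(n, p)) :
  adjmx (A *m B) = adjmx B *m adjmx A.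
Proof.
apply/matrixP => i j; rewrite adjmxE !mxE rmorph_sum; apply: eq_bigr => k _.
by rewrite !adjmxE rmorphM mulrC.
Qed.

Lemma adjmxD m n (A B : 'M[C]_(m, n)) : adjmx (A + B) = adjmx A + adjmx B.
Proof. by apply/matrixP => i j; rewrite !(adjmxE, mxE) rmorphD. Qed.

Lemma adjmxN m n (A : 'M[C]_(m, n)) : adjmx (- A) = - adjmx A.
Proof. by apply/matrixP => i j; rewrite !(adjmxE, mxE) rmorphN. Qed.

Lemma adjmxB m n (A B : 'M[C]_(m, n)) : adjmx (A - B) = adjmx A - adjmx B.
Proof. by rewrite adjmxD adjmxN. Qed.

Lemma adjmxZ m n a (A : 'M[C]_(m, n)) : adjmx (a *: A) = a^* *: adjmx A.
Proof. by apply/matrixP => i j; rewrite !(adjmxE, mxE) rmorphM. Qed.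

Lemma adjmx1 n : adjmx (1%:M : 'M[C]_n) = 1%:M.
Proof. by apply/matrixP => i j; rewrite !(adjmxE, mxE) eq_sym; case: eqP; rewrite /= ?conjC1 ?conjC0. Qed.

Lemma adjmx0 m n : adjmx (0 : 'M[C]_(m, n)) = 0.
Proof. by apply/matrixP => i j; rewrite !(adjmxE, mxE) conjC0. Qed.

Lemma adjmx_sum m n (I : finType) (F : I -> 'M[C]_(m, n)) :
  adjmx (\sum_i F i) = \sum_i adjmx (F i).
Proof.
apply/matrixP => i j; rewrite adjmxE !summxE rmorph_sum.
by apply: eq_bigr => k _; rewrite adjmxE.
Qed.

Lemma adjmx_tstar m n (A : 'M[C]_(m, n)) : A ^t* = adjmx A.
Proof. by apply/matrixP => i j; rewrite !mxE. Qed.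

Definition qf d (v : 'cV[C]_d) (A : 'M[C]_d) := (adjmx v *m A *m v) 0 0.

Lemma psd_gram m d (Q : 'M[C]_(m, d)) : psdmx (adjmx Q *m Q).
Proof.
split; first by rewrite adjmxM adjmxK.
move=> v; rewrite mulmxA -[adjmx v *m adjmx Q]adjmxM -mulmxA.
rewrite mxE; apply: sumr_ge0 => k _; rewrite adjmxE mulrC; exact: mul_conjC_ge0.
Qed.

Lemma psd0 d : psdmx (0 : 'M[C]_d).
Proof. by split; [rewrite adjmx0 | move=> v; rewrite mulmx0 mul0mx mxE]. Qed.

Lemma psdD d (A B : 'M[C]_d) : psdmx A -> psdmx B -> psdmx (A + B).
Proof.
move=> [hA fA] [hB fB]; split; first by rewrite adjmxD -hA -hB.
move=> v; rewrite mulmxDr mulmxDl mxE; exact: addr_ge0.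
Qed.

Lemma psd_sum d (I : finType) (P : pred I) (F : I -> 'M[C]_d) :
  (forall i, P i -> psdmx (F i)) -> psdmx (\sum_(i | P i) F i).
Proof.
move=> H; apply: (big_rec (fun X => psdmx X)); first exact: psd0.
by move=> i X Pi HX; apply: psdD => //; apply: H.
Qed.

Lemma psdZ d a (A : 'M[C]_d) : 0 <= a -> psdmx A -> psdmx (a *: A).
Proof.
move=> a0 [hA fA]; split; first by rewrite adjmxZ -hA geC0_conj.
move=> v; rewrite -scalemxAr scalemxAl.
have -> : a *: adjmx v *m A *m v = a *: (adjmx v *m A *m v) by rewrite !scalemxAl.
by rewrite mxE; apply: mulr_ge0 => //; apply: fA.
Qed.

Lemma qf_row m d (M : 'M[C]_(m, d)) (X : 'M[C]_d) i :
  (M *m X *m adjmx M) i i = qf (adjmx (row i M)) X.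
Proof.
rewrite /qf adjmxK !mxE; apply: eq_bigr => k _; rewrite !mxE.
by congr (_ * _); apply: eq_bigr => l _; rewrite !mxE.
Qed.

Lemma psd_sqrt d (A : 'M[C]_d) : psdmx A -> exists Q : 'M[C]_d, A = adjmx Q *m Q.
Proof.
move=> [hA fA].
have nA : A \is normalmx by apply/eqP; rewrite adjmx_tstar -hA.
have eA := orthomx_spectralP nA.
set U := spectralmx A in eA; set D := spectral_diag A in eA.
have uU : U \is unitarymx by exact: spectral_unitarymx.
have UU : U *m adjmx U = 1%:M by rewrite -adjmx_tstar; apply/unitarymxP.
rewrite invmx_unitary // adjmx_tstar in eA.
have DA : diag_mx D = U *m A *m adjmx U.
  by rewrite eA !mulmxA UU mul1mx -!mulmxA UU mulmx1.
have D0 j : 0 <= D 0 j.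
  have := fA (adjmx (row j U)); rewrite -[X in 0 <= X]/(qf (adjmx (row j U)) A) -qf_row -DA mxE eqxx mulr1n; exact.
exists (diag_mx (\row_j sqrtC (D 0 j)) *m U).
rewrite adjmxM !mulmxA -[adjmx U *m _ *m _]mulmxA.
have -> : adjmx (diag_mx (\row_j sqrtC (D 0 j))) *m diag_mx (\row_j sqrtC (D 0 j)) = diag_mx D.
  apply/matrixP => i j; rewrite mul_mx_diag !mxE eq_sym.
  case: eqP => [->|]; rewrite ?mulr1n ?mulr0n ?conjC0 ?mul0r //.
  by rewrite geC0_conj ?sqrtC_ge0 // -expr2 sqrtCK.
exact: eA.
Qed.

Lemma tr_psd d (X E : 'M[C]_d) : psdmx X -> psdmx E -> 0 <= \tr (X *m E).
Proof.
move=> [hX fX] /psd_sqrt [Q ->].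
rewrite mulmxA mxtrace_mulC mulmxA /mxtrace; apply: sumr_ge0 => i _.
rewrite qf_row; exact: fX.
Qed.

End Mx.

Lemma prod_sum_dep (Rg : comNzRingType) (I : finType) (T_ : I -> finType)
  (F : forall i, T_ i -> Rg) :
  \prod_i \sum_(k : T_ i) F i k =
  \sum_(c : {dffun forall i, T_ i}) \prod_i F i (c i).
Proof.
have E1 i : \sum_(k : T_ i) F i k =
    \sum_(p : {i : I & T_ i} | tagged_with T_ i p) F (tag p) (tagged p).
  have := @sig_big_dep Rg 0 +%R I T_ (pred1 i) (fun _ _ => true) F.
  rewrite big_pred1_eq => ->; apply: eq_bigl => p; by rewrite andbT.
under eq_bigr do rewrite E1.
rewrite bigA_distr_big_dep big_sub.
pose h (c : {dffun forall i, T_ i}) := to_family_tagged_with (fprod_of_dffun c).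
have hb : bijective h.
  apply: bij_comp; [exact: to_family_tagged_with_bij | exact: fprod_of_dffun_bij].
rewrite (reindex h) /=; last exact: onW_bij.
apply: eq_bigr => c _; apply: eq_bigr => i _.
by rewrite /h /= ffunE.
Qed.

Section Tens.
Variable R : realType.
Local Notation C := R[i].
Variables (L : nat) (d : 'I_L -> nat).
Local Notation T := (tidx d).
Local Notation tens := (@tensmxL R L d).

Lemma sum_enum_val (F : T -> C) :
  \sum_(i < #|T|) F (enum_val i) = \sum_(t : T) F t.
Proof. by rewrite (big_enum_val (A := T)). Qed.

Lemma eq_tens (A B : forall l, 'M[C]_(d l)) : (forall l, A l = B l) -> tens A = tens B.
Proof. by move=> H; apply/matrixP => i j; rewrite !mxE; apply: eq_bigr => l _; rewrite H. Qed.

Lemma tens_mul (X Y : forall l, 'M[C]_(d l)) :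
  tens (fun l => X l *m Y l) = tens X *m tens Y.
Proof.
apply/matrixP => i k; rewrite !mxE.
under eq_bigr do rewrite mxE.
rewrite (prod_sum_dep (fun l m => X l (enum_val i l) m * Y l m (enum_val k l))).
rewrite -(sum_enum_val (fun t => \prod_l (X l (enum_val i l) (t l) * Y l (t l) (enum_val k l)))).
by apply: eq_bigr => j _; rewrite !mxE big_split.
Qed.

Lemma tens_adj (X : forall l, 'M[C]_(d l)) :
  tens (fun l => adjmx (X l)) = adjmx (tens X).
Proof.
apply/matrixP => i j; rewrite adjmxE !mxE rmorph_prod.
by apply: eq_bigr => l _; rewrite adjmxE.
Qed.

Lemma tens1 : tens (fun l => 1%:M) = 1%:M.
Proof.
apply/matrixP => i j; rewrite !mxE.
case: (eqVneq i j) => [->|nij].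
  by apply: big1 => l _; rewrite mxE eqxx.
have [l hl] : exists l, enum_val i l != enum_val j l.
  apply/existsP; apply: contraT; rewrite negb_exists => /forallP H.
  suff : enum_val i = enum_val j by move/enum_val_inj => /eqP; rewrite (negbTE nij).
  by apply/ffunP => l; apply/eqP; have := H l; rewrite negbK.
by rewrite (bigD1 l) //= mxE (negbTE hl) mul0r.
Qed.

Lemma tensZ (c : 'I_L -> C) (X : forall l, 'M[C]_(d l)) :
  tens (fun l => c l *: X l) = (\prod_l c l) *: tens X.
Proof.
by apply/matrixP => i j; rewrite !mxE -big_split; apply: eq_bigr => l _; rewrite mxE.
Qed.

Lemma tens_sum (n : 'I_L -> nat) (F : forall l, 'I_(n l) -> 'M[C]_(d l)) :
  tens (fun l => \sum_k F l k) = \sum_(c : seq_index n) tens (fun l => F l (c l)).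
Proof.
apply/matrixP => i j; rewrite !mxE summxE.
under eq_bigr do rewrite summxE.
rewrite (prod_sum_dep (fun l k => F l k (enum_val i l) (enum_val j l))).
by apply: eq_bigr => c _; rewrite mxE.
Qed.

Lemma tens_add (X Y : forall l, 'M[C]_(d l)) :
  tens (fun l => X l + Y l) =
  \sum_(f : {ffun 'I_L -> bool}) tens (fun l => if f l then Y l else X l).
Proof.
apply/matrixP => i j; rewrite !mxE summxE.
have E l : (X l + Y l) (enum_val i l) (enum_val j l) =
   \sum_(b : bool) (if b then Y l else X l) (enum_val i l) (enum_val j l).
  by rewrite big_bool addrC [LHS]mxE.
under eq_bigr do rewrite E.
rewrite bigA_distr_bigA; apply: eq_bigr => f _; rewrite mxE; by apply: eq_bigr.
Qed.

Lemma tens_tr (X : forall l, 'M[C]_(d l)) : \tr (tens X) = \prod_l \tr (X l).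
Proof.
rewrite /mxtrace (eq_bigr (fun i : 'I_#|T| => \prod_l X l ((enum_val i : T) l) ((enum_val i : T) l))); last by move=> i _; rewrite mxE.
rewrite (sum_enum_val (fun t => \prod_l X l (t l) (t l))).
by rewrite (prod_sum_dep (fun l k => X l k k)).
Qed.

Lemma tens_psd (P : forall l, 'M[C]_(d l)) :
  (forall l, psdmx (P l)) -> psdmx (tens P).
Proof.
move=> H.
pose Q := fun l => projT1 (cid (psd_sqrt (H l))).
have EQ l : P l = adjmx (Q l) *m Q l by rewrite /Q; case: cid.
rewrite (eq_tens EQ) tens_mul tens_adj; exact: psd_gram.
Qed.

Lemma tens_mono (X Y : forall l, 'M[C]_(d l)) :
  (forall l, psdmx (X l)) -> (forall l, psdmx (Y l - X l)) ->
  psdmx (tens Y - tens X).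
Proof.
move=> hX hY.
have EY l : Y l = X l + (Y l - X l) by rewrite addrC subrK.
rewrite (eq_tens EY) tens_add (bigD1 [ffun=> false]) //=.
have -> : tens (fun l => if [ffun=> false] l then Y l - X l else X l) = tens X.
  by apply: eq_tens => l; rewrite ffunE.
rewrite addrAC subrr add0r; apply: psd_sum => f _; apply: tens_psd => l.
by case: (f l).
Qed.

End Tens.

Section Ens.
Local Open Scope classical_set_scope.
Variable R : realType.
Local Notation C := R[i].

Lemma psd1 d : psdmx (1%:M : 'M[C]_d).
Proof. by have := psd_gram (1%:M : 'M[C]_d); rewrite adjmx1 mulmx1. Qed.

Lemma ReM_real (a : R) (z : C) : complex.Re (a%:C * z)%C = a * complex.Re z.
Proof. by case: z => zr zi; rewrite /= mul0r subr0. Qed.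

Lemma real_ge0 (z : C) : 0 <= z -> (complex.Re z)%:C%C = z.
Proof. by move=> z0; apply: RRe_real; apply: ger0_real. Qed.

Lemma trRE d (X E : 'M[C]_d) : psdmx X -> psdmx E -> (trR X E)%:C%C = \tr (X *m E).
Proof. by move=> hX hE; apply: real_ge0; exact: tr_psd. Qed.

Lemma trR_ge0 d (X E : 'M[C]_d) : psdmx X -> psdmx E -> 0 <= trR X E.
Proof. by move=> hX hE; rewrite -ler0c trRE //; exact: tr_psd. Qed.

Lemma trRZ d (a : R) (X E : 'M[C]_d) : trR (a%:C%C *: X) E = a * trR X E.
Proof. by rewrite /trR -scalemxAl mxtraceZ ReM_real. Qed.

Lemma trR_mono d (P Q E : 'M[C]_d) : psdmx P -> psdmx (Q - P) -> psdmx E ->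
  trR P E <= trR Q E.
Proof.
move=> hP hQP hE.
have hQ : psdmx Q by have := psdD hP hQP; rewrite addrC subrK.
rewrite -subr_ge0 -ler0c rmorphB /= !trRE //.
have -> : \tr (Q *m E) - \tr (P *m E) = \tr ((Q - P) *m E).
  by rewrite mulmxBl raddfB.
exact: tr_psd.
Qed.

Lemma ltcR0 (a : R) : (0 < a%:C%C) = (0 < a).
Proof. by rewrite ltcR. Qed.

Variables (d : nat) (K : finType) (eta : K -> R) (rho : K -> 'M[C]_d) (x : K).
Local Notation B := (avg_state eta rho).

Lemma conf_elim r : confidences eta rho x r ->
  exists E, [/\ psdmx E, psdmx (1%:M - E), 0 < trR B E &
     r = eta x * trR (rho x) E / trR B E].
Proof.
move=> [M [[hM hS] [h0 ->]]]; exists (M (Some x)); split; [exact: hM | | exact: h0 | by []].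
rewrite -hS (bigD1 (Some x)) /=; last by [].
rewrite addrC addrK.
by apply: psd_sum => o _; apply: hM.
Qed.

Lemma conf_intro E : psdmx E -> psdmx (1%:M - E) -> 0 < trR B E ->
  confidences eta rho x (eta x * trR (rho x) E / trR B E).
Proof.
move=> hE h1E hB.
exists (fun o => if o == Some x then E else if o == None then 1%:M - E else 0).
split; last by rewrite eqxx.
split.
  move=> o; case: eqP => _; first exact: hE.
  case: eqP => _; [exact: h1E | exact: psd0].
rewrite (bigD1 (Some x)) /=; last by [].
rewrite eqxx (bigD1 None) /=; last by [].
rewrite big1; last by move=> o /andP [/negbTE -> /negbTE ->].
by rewrite addr0 addrC subrK.
Qed.

Hypothesis hens : ensemble eta rho.

Lemma rho_psd i : psdmx (rho i).
Proof. by case: hens => _ [_ h]; case: (h i). Qed.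

Lemma eta_gt0 i : 0 < eta i.
Proof. by case: hens. Qed.

Lemma A_psd i : psdmx ((eta i)%:C%C *: rho i).
Proof. by apply: psdZ; [rewrite ler0c; exact/ltW/eta_gt0 | exact: rho_psd]. Qed.

Lemma B_psd : psdmx B.
Proof. by apply: psd_sum => i _; exact: A_psd. Qed.

Lemma BA_psd : psdmx (B - (eta x)%:C%C *: rho x).
Proof.
rewrite /avg_state (bigD1 x) //= addrC addrK.
by apply: psd_sum => i _; exact: A_psd.
Qed.

Lemma trB : \tr B = 1.
Proof.
case: hens => _ [hs hd].
rewrite /avg_state raddf_sum /=.
transitivity ((\sum_i eta i)%:C%C); last by rewrite hs.
rewrite rmorph_sum; apply: eq_bigr => i _; rewrite mxtraceZ.
by case: (hd i) => _ ->; rewrite mulr1.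
Qed.

Definition Sconf := confidences eta rho x.

Lemma S_eta : Sconf (eta x).
Proof.
have h1 : trR B 1%:M = 1 by rewrite /trR mulmx1 trB.
have := @conf_intro 1%:M (psd1 d).
rewrite subrr h1 /trR mulmx1 => /(_ (psd0 _ _) ltr01).
by case: hens => _ [_ hd]; case: (hd x) => _ ->; rewrite divr1 mulr1.
Qed.

Lemma S_ub : ubound Sconf 1.
Proof.
move=> r /conf_elim [E [hE h1E hBE ->]].
rewrite ler_pdivrMr // mul1r -trRZ.
apply: trR_mono; [exact: A_psd | exact: BA_psd | exact: hE].
Qed.

Lemma S_has_sup : has_sup Sconf.
Proof. by split; [exists (eta x); exact: S_eta | exists 1; exact: S_ub]. Qed.

Lemma c_ge : eta x <= sup Sconf.
Proof. exact: (sup_upper_bound S_has_sup S_eta). Qed.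

Lemma c_gt0 : 0 < sup Sconf.
Proof. exact: lt_le_trans (eta_gt0 x) c_ge. Qed.

Lemma approx t : 0 < t < 1 -> exists E, [/\ psdmx E, psdmx (1%:M - E), 0 < trR B E &
     t * sup Sconf < eta x * trR (rho x) E / trR B E].
Proof.
move=> /andP [t0 t1].
have e0 : 0 < (1 - t) * sup Sconf by rewrite mulr_gt0 ?subr_gt0 ?c_gt0.
have [r Sr hr] := sup_adherent e0 S_has_sup.
have [E [hE h1E hBE er]] := conf_elim Sr.
exists E; split; [exact: hE | exact: h1E | exact: hBE | rewrite -er]; apply: le_lt_trans hr.
by rewrite mulrBl mul1r opprB addrCA subrr addr0.
Qed.

Lemma entryB m n (M N : 'M[C]_(m, n)) i j : (M - N) i j = M i j - N i j.
Proof. by rewrite !mxE. Qed.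

Lemma entryZ m n a (M : 'M[C]_(m, n)) i j : (a *: M) i j = a * M i j.
Proof. by rewrite !mxE. Qed.

Lemma tr1x1 (M : 'M[C]_1) : \tr M = M 0 0.
Proof. by rewrite /mxtrace big_ord1. Qed.

Lemma loewner : psdmx ((sup Sconf)%:C%C *: B - (eta x)%:C%C *: rho x).
Proof.
set c := sup Sconf.
have hA := A_psd x; have hBA := BA_psd; have hB := B_psd.
have c0 : 0 <= c%:C%C by rewrite ler0c; exact/ltW/c_gt0.
have e0 : 0 <= (eta x)%:C%C by rewrite ler0c; exact/ltW/eta_gt0.
split.
  case: hB => hb _; case: (rho_psd x) => hr _.
  by rewrite adjmxB !adjmxZ -hb -hr !geC0_conj.
move=> v.
set A := (eta x)%:C%C *: rho x.
have -> : adjmx v *m (c%:C%C *: B - A) *m v =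
    c%:C%C *: (adjmx v *m B *m v) - adjmx v *m A *m v.
  by rewrite mulmxBr mulmxBl -scalemxAr -scalemxAl.
rewrite entryB entryZ.
set a := (adjmx v *m A *m v) 0 0; set b := (adjmx v *m B *m v) 0 0.
have a0 : 0 <= a by case: hA => _; apply.
have ba : 0 <= b - a.
  by case: hBA => _ /(_ v); rewrite mulmxBr mulmxBl entryB.
have b0 : 0 <= b by rewrite -(subrK a b) addr_ge0.
case: (eqVneq b 0) => [bz | bnz].
  have az : a = 0 by move: ba; rewrite bz add0r oppr_ge0 => ha; apply: le_anti; rewrite ha a0.
  by rewrite bz az mulr0 subr0.
have bp : 0 < b by rewrite lt_def bnz b0.
set s := (adjmx v *m v) 0 0.
have s0 : 0 <= s.
  rewrite /s mxE; apply: sumr_ge0 => k _; rewrite adjmxE mulrC; exact: mul_conjC_ge0.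
have snz : s != 0.
  apply/negP => /eqP sz; move: bnz; rewrite /b.
  have -> : v = 0.
    apply/matrixP => k j; rewrite ord1 mxE.
    move: sz; rewrite /s mxE => /eqP; rewrite psumr_eq0 => [/allP /(_ k) |].
      rewrite mem_index_enum /= adjmxE mulf_eq0 conjC_eq0.
      by move=> /(_ isT); rewrite orbb => /eqP.
    by move=> i _; rewrite adjmxE mulrC; exact: mul_conjC_ge0.
  by rewrite mulmx0 mxE eqxx.
have sp : 0 < s by rewrite lt_def snz s0.
have hvv : adjmx v *m v = s%:M.
  by apply/matrixP => i j; rewrite !ord1 [RHS]mxE eqxx mulr1n.
set P := s^-1 *: (v *m adjmx v).
have hPadj : adjmx P = P.
  by rewrite /P adjmxZ adjmxM adjmxK geC0_conj // invr_ge0.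
have hPP : P *m P = P.
  rewrite /P -scalemxAl -scalemxAr scalerA mulmxA -[v *m adjmx v *m v]mulmxA hvv.
  by rewrite mul_mx_scalar -scalemxAl scalerA -mulrA mulVf // mulr1.
have psdP : psdmx P by have := psd_gram P; rewrite hPadj hPP.
have psd1P : psdmx (1%:M - P).
  have := psd_gram (1%:M - P).
  by rewrite adjmxB adjmx1 hPadj mulmxBl mul1mx mulmxBr mulmx1 hPP subrr subr0.
have trP X : \tr (X *m P) = s^-1 * (adjmx v *m X *m v) 0 0.
  rewrite /P -scalemxAr mxtraceZ mulmxA mxtrace_mulC tr1x1.
  by rewrite mulmxA.
have hBP : 0 < trR B P by rewrite -ltcR0 trRE // trP mulr_gt0 // invr_gt0.
have Sr := conf_intro psdP psd1P hBP.
have := sup_upper_bound S_has_sup Sr; rewrite -/c ler_pdivrMr // => hle.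
have : ((eta x * trR (rho x) P)%:C <= (c * trR B P)%:C)%C by rewrite lecR.
rewrite !rmorphM /= !trRE //; last exact: rho_psd.
rewrite !trP -/b mulrA (mulrC (eta x)%:C%C) -mulrA.
have -> : (eta x)%:C%C * (adjmx v *m rho x *m v) 0 0 = a.
  by rewrite /a /A -scalemxAr -scalemxAl entryZ.
rewrite mulrCA ler_pM2l ?invr_gt0 // => h.
by rewrite subr_ge0.
Qed.

End Ens.

Lemma bern (F : realFieldType) (e : F) n : 0 <= e <= 1 -> 1 - n%:R * e <= (1 - e) ^+ n.
Proof.
move=> /andP [e0 e1]; elim: n => [|n IH]; first by rewrite mul0r subr0 expr0.
rewrite exprS -natr1.
have h1 : 0 <= 1 - e by rewrite subr_ge0.
have := ler_wpM2l h1 IH.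
have : 0 <= n%:R * e * e by rewrite mulr_ge0 // mulr_ge0.
nra.
Qed.

Lemma approx_final (F : realFieldType) (U s : F) n : 0 <= U ->
  (forall t, 0 < t < 1 -> t ^+ n * U <= s) -> U <= s.
Proof.
move=> U0 H; rewrite leNgt; apply/negP => hs.
set dl := U - s.
have dl0 : 0 < dl by rewrite subr_gt0.
have N0 : 0 <= n%:R :> F by [].
set D := (n%:R + 1) * (U + 1).
have D0 : 0 < D by rewrite mulr_gt0 // ?ltr_wpDl // ?ler0n // ?ltr_wpDl.
set e := Num.min (2^-1) (dl / D).
have e0 : 0 < e by rewrite lt_min invr_gt0 ltr0n divr_gt0.
have e1 : e <= 2^-1 by rewrite ge_min lexx.
have e2 : e * D <= dl by rewrite -ler_pdivlMr // ge_min lexx orbT.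
have h2 : 2^-1 < 1 :> F by rewrite invf_lt1 // ltr1n.
have := H (1 - e); rewrite subr_gt0 gtrBl e0 andbT => /(_ (le_lt_trans e1 h2)) hH.
have hb' : 1 - n%:R * e <= (1 - e) ^+ n.
  by apply: bern; apply/andP; split; [exact: ltW | exact: (le_trans e1 (ltW h2))].
have := ler_wpM2r U0 hb'.
rewrite /D in e2; rewrite /dl in dl0 e2.
nra.
Qed.


Theorem theorem4 (R : realType) (L : nat) (n d : 'I_L -> nat)
    (eta : forall l : 'I_L, 'I_(n l) -> R)
    (rho : forall l : 'I_L, 'I_(n l) -> 'M[R[i]]_(d l))
    (x : seq_index n) :
  (forall l : 'I_L, ensemble (eta l) (rho l)) ->
  max_conf (seq_eta eta) (seq_rho rho) x
    = \prod_(l < L) max_conf (eta l) (rho l) (x l).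
Proof.
move=> hens.
pose Bl := fun l => avg_state (eta l) (rho l).
pose c := fun l => max_conf (eta l) (rho l) (x l).
rewrite -/(\prod_(l < L) c l).
set U := \prod_(l < L) c l.
pose SS := confidences (seq_eta eta) (seq_rho rho) x.
rewrite /max_conf -/SS.
have hBs : avg_state (seq_eta eta) (seq_rho rho) = tensmxL Bl.
  rewrite /Bl /avg_state tens_sum; apply: eq_bigr => cc _.
  by rewrite tensZ /seq_eta rmorph_prod.
have hBs_psd : psdmx (tensmxL Bl) by apply: tens_psd => l; exact: B_psd.
have hrs_psd : psdmx (seq_rho rho x) by apply: tens_psd => l; exact: rho_psd.
have U0 : 0 <= U by apply: prodr_ge0 => l _; exact/ltW/c_gt0.
have hub : ubound SS U.
  move=> r /conf_elim [E [hE h1E hBE ->]].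
  rewrite hBs in hBE *.
  rewrite ler_pdivrMr // -!trRZ.
  apply: trR_mono => //.
  - by apply: psdZ => //; rewrite ler0c prodr_ge0 // => l _; exact/ltW/eta_gt0.
  - have := @tens_mono R L d (fun l => (eta l (x l))%:C%C *: rho l (x l))
        (fun l => (c l)%:C%C *: Bl l).
    rewrite !tensZ -!rmorph_prod; apply.
      by move=> l; exact: A_psd.
    by move=> l; exact: loewner.
have hlow : forall t, 0 < t < 1 -> exists2 r, SS r & t ^+ L * U <= r.
  move=> t ht.
  pose E := fun l => projT1 (cid (approx (x l) (hens l) ht)).
  have hE : forall l, [/\ psdmx (E l), psdmx (1%:M - E l), 0 < trR (Bl l) (E l) &
     t * c l < eta l (x l) * trR (rho l (x l)) (E l) / trR (Bl l) (E l)].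
    by move=> l; rewrite /E; case: cid.
  pose Es := tensmxL E.
  have psdEs : psdmx Es by apply: tens_psd => l; case: (hE l).
  have psd1Es : psdmx (1%:M - Es).
    have := @tens_mono R L d E (fun l => 1%:M).
    rewrite tens1; apply; first by move=> l; case: (hE l).
    by move=> l; case: (hE l).
  have hprodB : trR (tensmxL Bl) Es = \prod_l trR (Bl l) (E l).
    rewrite {1}/trR -tens_mul tens_tr.
    rewrite (eq_bigr (fun l => (trR (Bl l) (E l))%:C%C)); last first.
      move=> l _; rewrite trRE //; first exact: B_psd.
      by case: (hE l).
    by rewrite -rmorph_prod.
  have hprodR : trR (seq_rho rho x) Es = \prod_l trR (rho l (x l)) (E l).
    rewrite {1}/trR /seq_rho -tens_mul tens_tr.
    rewrite (eq_bigr (fun l => (trR (rho l (x l)) (E l))%:C%C)); last first.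
      move=> l _; rewrite trRE //; first exact: rho_psd.
      by case: (hE l).
    by rewrite -rmorph_prod.
  have hBEs : 0 < trR (tensmxL Bl) Es.
    by rewrite hprodB prodr_gt0 // => l _; case: (hE l).
  have hBEs' : 0 < trR (avg_state (seq_eta eta) (seq_rho rho)) Es by rewrite hBs.
  have Sr := conf_intro x psdEs psd1Es hBEs'.
  exists (seq_eta eta x * trR (seq_rho rho x) Es / trR (avg_state (seq_eta eta) (seq_rho rho)) Es) => //.
  rewrite hBs hprodB hprodR /seq_eta -prodfV -!big_split /=.
  have tL : t ^+ L = \prod_(l < L) t by rewrite prodr_const card_ord.
  rewrite /U tL -big_split /=.
  apply: ler_prod => l _; case: (hE l) => _ _ _ hl; rewrite (ltW hl) andbT.
  have t0 : 0 <= t by case/andP: (ht) => /ltW.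
  by rewrite mulr_ge0 //; exact/ltW/c_gt0.
have h2 : 0 < (2^-1 : R) < 1.
  have a1 : (0 : R) < 2^-1 by rewrite invr_gt0 ltr0n.
  have a2 : (2^-1 : R) < 1 by rewrite invf_lt1 ?ltr0n // ltr1n.
  by rewrite a1 a2.
have [r0 Sr0 _] := hlow _ h2.
have hsup : has_sup SS by split; [exists r0 | exists U].
apply: le_anti; rewrite ge_sup //=; last by exists r0.
apply: approx_final U0 _ => t ht.
have [r Sr hr] := hlow t ht.
exact: le_trans hr (sup_upper_bound hsup Sr).
Qed.
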